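(* Let $G$ be a finite abelian group, $M$ a $\mathbb{Z}[G]$-lattice and $r\ge1$. Then the map $P$ restricts to an isomorphism of $\mathbb{Z}[G]$-modules \[ \wedge_0^rM\xrightarrow{\ \sim\ }(M,G)^r_\star . \]
   Context: A $\mathbb{Z}[G]$-lattice is a finitely generated $\mathbb{Z}[G]$-module that is free as a $\mathbb{Z}$-module; write $m^\sigma$ for the action of $\sigma\in G$ on $m\in M$. For a $\mathbb{Z}[G]$-module $N$ write $\mathbb{Q}N=\mathbb{Q}\otimes_{\mathbb{Z}}N$ and $N[G]=N\otimes_{\mathbb{Z}}\mathbb{Z}[G]$. Let $G$ act on $(\bigotimes^r_{\mathbb{Z}}M)[G]$ by $\sigma(m_1\otimes\dots\otimes m_r\otimes[\tau])=m_1\otimes\dots\otimes m_r\otimes[\sigma\tau]$, and for $\sigma\in G$ let $c_\sigma(m_1\otimes\dots\otimes m_r\otimes[\tau])=m_1^\sigma\otimes m_2\otimes\dots\otimes m_r\otimes[\tau]$. The symmetric group $\mathfrak{S}_r$ acts on $(\bigotimes^rM)[G]$ by permuting the tensor factors of $\bigotimes^rM$; $m$ is antisymmetric if $fm=\mathrm{sgn}(f)m$ for all $f\in\mathfrak S_r$. Define $(M,G)^r_\star=\{m\in(\bigotimes^r_{\mathbb{Z}}M)[G]: m\text{ antisymmetric and }c_\sigma(m)=\sigma m\ \forall\sigma\in G\}$. For $\varphi_1,\dots,\varphi_r\in\mathrm{Hom}_{\mathbb{Z}[G]}(M,\mathbb{Z}[G])$ let $\varphi_1\wedge\dots\wedge\varphi_r$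 be the map $\mathbb{Q}\wedge^r_{\mathbb{Z}[G]}M\to\mathbb{Q}[G]$, $m_1\wedge\dots\wedge m_r\mapsto\det(\varphi_i(m_j))$. Rubin's lattice is $\wedge_0^rM=\{m\in\mathbb{Q}\wedge^r_{\mathbb{Z}[G]}M:(\varphi_1\wedge\dots\wedge\varphi_r)(m)\in\mathbb{Z}[G]\ \forall\varphi_1,\dots,\varphi_r\}$. Define the $\mathbb{Z}[G]$-linear map $P:\mathbb{Q}\wedge^r_{\mathbb{Z}[G]}M\to\mathbb{Q}(\bigotimes^r_{\mathbb{Z}}M)[G]$ by $P(m_1\wedge\dots\wedge m_r)=\sum_{f\in\mathfrak S_r}\mathrm{sgn}(f)\bigotimes_{j=1}^r\Big(\sum_{\sigma\in G}m_{f(j)}^{\sigma^{-1}}[\sigma]\Big)$, where for elements $\sum_\sigma a_{j,\sigma}[\sigma]\in M[G]$ ($1\le j\le r$) their tensor $\bigotimes_j$ means $\sum_{\sigma_1,\dots,\sigma_r}a_{1,\sigma_1}\otimes\dots\otimes a_{r,\sigma_r}[\sigma_1\cdots\sigma_r]$. *)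

(* Defs.v *)
(* Concrete model of a Z[G]-lattice: M = Z^n (row vectors)
   with G acting by integer matrices rho sigma, m^sigma := m *m rho sigma. *)
From HB Require Import structures.
From mathcomp Require Import all_boot all_order all_fingroup all_algebra.
Set Implicit Arguments. Unset Strict Implicit. Unset Printing Implicit Defensive.
Import Order.TTheory GRing.Theory Num.Theory.
Local Open Scope ring_scope.

Definition fscale (T : finType) (c : rat) (w : {ffun T -> rat}) : {ffun T -> rat} :=
  [ffun x => c * w x].

Section Defs.
Variables (gT : finGroupType) (n r : nat) (rho : gT -> 'M[int]_n).

Definition rhoQ (s : gT) : 'M[rat]_n := map_mx (fun z : int => z%:~R) (rho s).

Definition is_lattice_rep : Prop :=
  rho 1%g = 1%:M /\ forall s t : gT, rho (s * t)%g = rho s *m rho t.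

(* index set of the standard Z-basis e_{i_1} (x) ... (x) e_{i_r} of (x)^r M *)
Local Notation tidx := {ffun 'I_r -> 'I_n}.
(* Q (x)^r_Z M *)
Local Notation tens := {ffun tidx -> rat}.
(* Q ((x)^r_Z M)[G] *)
Local Notation gtens := {ffun tidx * gT -> rat}.
Local Notation qg := {ffun gT -> rat}.

Definition e_ (i : 'I_n) : 'rV[rat]_n := delta_mx 0 i.

Definition ptens (v : 'I_r -> 'rV[rat]_n) : tens :=
  [ffun k : tidx => \prod_(j < r) v j 0 (k j)].

Definition upd (v : 'I_r -> 'rV[rat]_n) (i : 'I_r) (w : 'rV[rat]_n) :=
  fun j => if j == i then w else v j.

(* generators of the kernel of Q (x)^r_Z M ->> Q /\^r_{Z[G]} M
   (= /\^r_{Q[G]} QM): tensors with two equal entries, and the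
   Q[G]-balancing relations  ..(sigma m_i).. - ..(sigma m_j)..  *)
Definition wedge_gen (w : tens) : Prop :=
  (exists (v : 'I_r -> 'rV[rat]_n) (i j : 'I_r),
      i != j /\ v i = v j /\ w = ptens v) \/
  (exists (v : 'I_r -> 'rV[rat]_n) (i j : 'I_r) (s : gT),
      w = ptens (upd v i (v i *m rhoQ s)) - ptens (upd v j (v j *m rhoQ s))).

(* t lies in the Q-span of the generators, i.e. t = 0 in Q /\^r_{Z[G]} M *)
Definition wedge_rel (t : tens) : Prop :=
  exists (k : nat) (c : 'I_k -> rat) (w : 'I_k -> tens),
    (forall l, wedge_gen (w l)) /\ t = \sum_(l < k) fscale (c l) (w l).

(* Z[G]-action on Q /\^r M (sigma acts on slot i0) on representatives *)
Definition tact (i0 : 'I_r) (s : gT) (t : tens) : tens :=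
  [ffun k : tidx => \sum_(l < n) t (finfun (fun j => if j == i0 then l else k j))
                                  * rhoQ s l (k i0)].

(* tensor product of elements sum_sigma a_{j,sigma}[sigma] of QM[G] *)
Definition gtensor (a : 'I_r -> gT -> 'rV[rat]_n) : gtens :=
  [ffun p : tidx * gT =>
     \sum_(s : {ffun 'I_r -> gT} | (\prod_(j < r) s j)%g == p.2)
        \prod_(j < r) a j (s j) 0 (p.1 j)].

Definition P_pure (v : 'I_r -> 'rV[rat]_n) : gtens :=
  \sum_(f : 'S_r) fscale ((-1) ^+ f) (gtensor (fun j s => v (f j) *m rhoQ (s^-1)%g)).

Definition Pmap (t : tens) : gtens :=
  \sum_(k : tidx) fscale (t k) (P_pure (fun j => e_ (k j))).

(* Hom_{Z[G]}(M, Z[G]) : phi i = phi(e_i) in Z[G] *)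
Definition phiQ (phi : 'I_n -> gT -> int) (m : 'rV[rat]_n) : qg :=
  [ffun t => \sum_(i < n) m 0 i * (phi i t)%:~R].

Definition is_ZG_hom (phi : 'I_n -> gT -> int) : Prop :=
  forall (s : gT) (i : 'I_n),
    phiQ phi (e_ i *m rhoQ s) = [ffun t => (phi i (s^-1 * t)%g)%:~R].

Definition qgprod (x : 'I_r -> qg) : qg :=
  [ffun t => \sum_(s : {ffun 'I_r -> gT} | (\prod_(j < r) s j)%g == t)
                \prod_(j < r) x j (s j)].

Definition wedge_phi (phis : 'I_r -> 'I_n -> gT -> int) (t : tens) : qg :=
  \sum_(k : tidx) fscale (t k)
     (\sum_(f : 'S_r) fscale ((-1) ^+ f) (qgprod (fun a => phiQ (phis a) (e_ (k (f a)))))).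

(* Rubin's lattice /\_0^r M (on representatives) *)
Definition rubin (t : tens) : Prop :=
  forall phis : 'I_r -> 'I_n -> gT -> int,
    (forall a, is_ZG_hom (phis a)) ->
    forall s : gT, wedge_phi phis t s \is a Num.int.

Definition grp_act (s : gT) (y : gtens) : gtens :=
  [ffun p : tidx * gT => y (p.1, (s^-1 * p.2)%g)].

Definition cmap (i0 : 'I_r) (s : gT) (y : gtens) : gtens :=
  [ffun p : tidx * gT =>
     \sum_(l < n) y (finfun (fun j => if j == i0 then l else p.1 j), p.2)
                  * rhoQ s l (p.1 i0)].

Definition permact (f : 'S_r) (y : gtens) : gtens :=
  [ffun p : tidx * gT => y (finfun (fun j => p.1 (f j)), p.2)].

(* (M,G)^r_star, with i0 the first tensor slot *)
Definition star (i0 : 'I_r) (y : gtens) : Prop :=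
  (forall p, y p \is a Num.int) /\
  (forall f : 'S_r, permact f y = fscale ((-1) ^+ f) y) /\
  (forall s : gT, cmap i0 s y = grp_act s y).

End Defs.

(* Main.v *)
Require Import Defs.
From HB Require Import structures.
From mathcomp Require Import all_boot all_order all_fingroup all_algebra.
From mathcomp Require Import ring lra.
Set Implicit Arguments. Unset Strict Implicit. Unset Printing Implicit Defensive.
Import Order.TTheory GRing.Theory Num.Theory.
Local Open Scope ring_scope.

Section Grp.
Variable gT : finGroupType.
Hypothesis mulC : commutative (@mulg gT).
Definition amul := @mulg gT.
HB.instance Definition _ := Monoid.isComLaw.Build gT 1%g amul (@mulgA gT) mulC (@mul1g gT).

Lemma prodgD1 (I : finType) (j : I) (F : I -> gT) :
  (\prod_(i : I) F i = F j * \prod_(i | i != j) F i)%g.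
Proof. change (\big[amul/1%g]_i F i = amul (F j) (\big[amul/1%g]_(i | i != j) F i)). exact: bigD1. Qed.

Lemma prodg_eq (I : finType) (j : I) (F G : I -> gT) :
  (forall i, i != j -> F i = G i) -> (\prod_(i : I) F i * G j = \prod_(i : I) G i * F j)%g.
Proof.
move=> H; rewrite (prodgD1 j F) (prodgD1 j G).
rewrite (eq_bigr G) //.
by rewrite [LHS]mulC mulgA -[RHS]mulgA [in RHS](mulC _ (F j)) mulgA.
Qed.

Lemma prodg_perm (I : finType) (h : I -> I) (F : I -> gT) :
  injective h -> (\prod_(i : I) F (h i) = \prod_(i : I) F i)%g.
Proof.
move=> ih; change (\big[amul/1%g]_i F (h i) = \big[amul/1%g]_i F i).
by rewrite [RHS](reindex_inj ih).
Qed.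

End Grp.

Section Main.
Variables (gT : finGroupType) (n r : nat) (rho : gT -> 'M[int]_n).
Hypothesis mulC : commutative (@mulg gT).
Hypothesis Hrho : is_lattice_rep rho.

Local Notation tidx := {ffun 'I_r -> 'I_n}.
Local Notation tens := {ffun tidx -> rat}.
Local Notation gtens := {ffun tidx * gT -> rat}.
Local Notation sigT := {ffun 'I_r -> gT}.
Local Notation A := (rhoQ rho).

Lemma A1 : A 1%g = 1%:M.
Proof. case: Hrho => h1 _; apply/matrixP=> i j; rewrite /rhoQ h1 !mxE; by case: (i == j). Qed.

Lemma AM s t : A (s * t)%g = A s *m A t.
Proof. case: Hrho => _ hM; by rewrite /rhoQ hM map_mxM. Qed.

Lemma AC s t : A s *m A t = A t *m A s.
Proof. by rewrite -!AM mulC. Qed.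

Lemma eE i (M : 'M[rat]_n) c : (e_ i *m M) 0 c = M i c.
Proof. by rewrite /e_ -rowE mxE. Qed.

Definition sh (j0 : 'I_r) (s : gT) (x : sigT) : sigT :=
  [ffun j => if j == j0 then (x j * s)%g else x j].

Lemma prod_sh j0 s x : (\prod_j sh j0 s x j = (\prod_j x j) * s)%g.
Proof.
rewrite (prodgD1 mulC j0) (prodgD1 mulC j0 x) ffunE eqxx.
rewrite (eq_bigr x); last by move=> i /negbTE; rewrite ffunE => ->.
by rewrite -mulgA (mulC s) mulgA.
Qed.

Lemma shK j0 s : cancel (sh j0 s) (sh j0 s^-1).
Proof. move=> x; apply/ffunP=> j; rewrite !ffunE; case: ifP => h; by rewrite ?h ?mulgK. Qed.

Lemma sum_sh (F : sigT -> rat) j0 s g :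
  \sum_(x : sigT | (\prod_j x j == g)%g) F (sh j0 s x) =
  \sum_(x : sigT | (\prod_j x j == g * s)%g) F x.
Proof.
rewrite [RHS](reindex (sh j0 s)); last first.
  by apply: onW_bij; exists (sh j0 s^-1); [apply: shK | move=> x; have := shK j0 s^-1 x; rewrite invgK].
by apply: eq_bigl => x; rewrite prod_sh (inj_eq (mulIg s)).
Qed.


Definition W (u : 'I_r -> 'rV[rat]_n) (x : sigT) (k' : tidx) : rat :=
  \prod_(j < r) (u j *m A (x j)^-1) 0 (k' j).
Definition Pv (v : 'I_r -> 'rV[rat]_n) (k' : tidx) (g : gT) : rat :=
  \sum_(f : 'S_r) (-1) ^+ f * \sum_(x : sigT | (\prod_j x j == g)%g) W (fun j => v (f j)) x k'.

Lemma PmapE t k' g : Pmap rho t (k', g) = \sum_k t k * Pv (fun j => e_ (k j)) k' g.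
Proof.
rewrite /Pmap sum_ffunE; apply: eq_bigr => k _; rewrite ffunE /P_pure sum_ffunE /Pv; congr (_ * _).
by apply: eq_bigr => f _; rewrite !ffunE.
Qed.

Lemma core (v : 'I_r -> 'rV[rat]_n) (f : 'S_r) x k' :
  \sum_(k : tidx) (\prod_j v j 0 (k j)) * W (fun j => e_ (k (f j))) x k'
  = W (fun j => v (f j)) x k'.
Proof.
rewrite /W.
under [RHS]eq_bigr do rewrite mxE.
rewrite bigA_distr_bigA /=.
rewrite (reindex (fun kap : tidx => [ffun j => kap ((f^-1)%g j)])); last first.
  apply: onW_bij; exists (fun k : tidx => [ffun j => k (f j)]) => kap; apply/ffunP => j; by rewrite !ffunE ?permK ?permKV.
apply: eq_bigr => kap _.
rewrite (reindex_inj (@perm_inj _ f)) /= -big_split /=; apply: eq_bigr => j _.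
by rewrite !ffunE permK eE.
Qed.

Lemma Pmap_ptens (v : 'I_r -> 'rV[rat]_n) k' g : Pmap rho (ptens v) (k', g) = Pv v k' g.
Proof.
rewrite PmapE /Pv.
under eq_bigr => k _ do rewrite ffunE mulr_sumr.
rewrite exchange_big /=; apply: eq_bigr => f _.
under eq_bigr => k _ do rewrite mulrCA mulr_sumr.
rewrite -mulr_sumr; congr (_ * _).
rewrite exchange_big /=; apply: eq_bigr => x _.
exact: core.
Qed.


Lemma Pv_alt (v : 'I_r -> 'rV[rat]_n) i j k' g : i != j -> v i = v j -> Pv v k' g = 0.
Proof.
move=> ij vij.
have H : Pv v k' g = - Pv v k' g.
  rewrite {1}/Pv (reindex_inj (mulIg (tperm i j))) /=.
  rewrite /Pv -sumrN; apply: eq_bigr => f _.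
  rewrite odd_permM odd_tperm ij signr_addb mulrN1 mulNr; congr (- (_ * _)).
  apply: eq_bigr => x _; rewrite /W; apply: eq_bigr => l _; rewrite permM.
  by case: tpermP => [->|->|] //; rewrite vij.
lra.
Qed.

Lemma W_upd (v : 'I_r -> 'rV[rat]_n) (f : 'S_r) i s x k' :
  W (fun j => upd v i (v i *m A s) (f j)) x k' = W (fun j => v (f j)) (sh ((f^-1)%g i) s^-1 x) k'.
Proof.
rewrite /W; apply: eq_bigr => j _; rewrite /upd ffunE.
have -> : (f j == i) = (j == (f^-1)%g i).
  by apply/eqP/eqP => [<-|->]; rewrite ?permK ?permKV.
case: eqP => [->|_] //.
by rewrite permKV invMg invgK AM mulmxA.
Qed.

Lemma Pv_upd (v : 'I_r -> 'rV[rat]_n) i s k' g : Pv (upd v i (v i *m A s)) k' g = Pv v k' (s^-1 * g)%g.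
Proof.
rewrite /Pv; apply: eq_bigr => f _; congr (_ * _).
under eq_bigr do rewrite W_upd.
by rewrite (sum_sh (fun x => W (fun j => v (f j)) x k')) [(g * _)%g]mulC.
Qed.

Lemma Pmap_sub (a b : tens) : Pmap rho (a - b) = Pmap rho a - Pmap rho b.
Proof.
apply/ffunP => -[k' g]; rewrite !ffunE !PmapE -sumrB; apply: eq_bigr => k _.
by rewrite !ffunE mulrBl.
Qed.

Lemma Pmap_lin (I : finType) (c : I -> rat) (w : I -> tens) :
  Pmap rho (\sum_i fscale (c i) (w i)) = \sum_i fscale (c i) (Pmap rho (w i)).
Proof.
apply/ffunP => -[k' g]; rewrite PmapE !sum_ffunE.
under eq_bigr => k _ do rewrite sum_ffunE mulr_suml.
rewrite exchange_big /=; apply: eq_bigr => i _.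
rewrite !ffunE PmapE mulr_sumr; apply: eq_bigr => k _.
by rewrite ffunE mulrA.
Qed.

Lemma Pmap_gen (w : tens) : wedge_gen rho w -> Pmap rho w = 0.
Proof.
case=> [[v [i [j [ij [vij ->]]]]] | [v [i [j [s ->]]]]]; apply/ffunP => -[k' g]; rewrite ffunE.
  by rewrite Pmap_ptens (Pv_alt _ _ ij vij).
by rewrite Pmap_sub !ffunE !Pmap_ptens !Pv_upd subrr.
Qed.

Lemma part1 (t : tens) : wedge_rel rho t -> Pmap rho t = 0.
Proof.
case=> k [c [w [Hg ->]]].
rewrite Pmap_lin; apply: big1 => l _; rewrite Pmap_gen //.
by apply/ffunP => p; rewrite !ffunE mulr0.
Qed.


Lemma slot_sum (X : 'I_r -> 'rV[rat]_n) (B : 'M[rat]_n) i0 (k : tidx) :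
  \sum_(l < n) (\prod_j X j 0 (finfun (fun j => if j == i0 then l else k j) j)) * B l (k i0)
  = \prod_j (if j == i0 then X j *m B else X j) 0 (k j).
Proof.
rewrite [RHS](bigD1 i0) //= eqxx mxE mulr_suml; apply: eq_bigr => l _.
rewrite (bigD1 i0) //= ffunE eqxx mulrAC; congr (_ * _).
by apply: eq_bigr => j /negbTE ji; rewrite ffunE ji.
Qed.

Lemma tact_ptens i0 s (v : 'I_r -> 'rV[rat]_n) :
  tact rho i0 s (ptens v) = ptens (upd v i0 (v i0 *m A s)).
Proof.
apply/ffunP => k; rewrite !ffunE.
under eq_bigr do rewrite ffunE.
rewrite slot_sum; apply: eq_bigr => j _; rewrite /upd; by case: eqP => // ->.
Qed.

Lemma tact_lin i0 s (I : finType) (c : I -> rat) (w : I -> tens) :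
  tact rho i0 s (\sum_i fscale (c i) (w i)) = \sum_i fscale (c i) (tact rho i0 s (w i)).
Proof.
apply/ffunP => k; rewrite ffunE !sum_ffunE.
under eq_bigr => l _ do rewrite sum_ffunE mulr_suml.
rewrite exchange_big /=; apply: eq_bigr => i _.
rewrite !ffunE mulr_sumr; apply: eq_bigr => l _.
by rewrite ffunE mulrA.
Qed.

Lemma grp_act_lin s (I : finType) (c : I -> rat) (w : I -> gtens) :
  grp_act s (\sum_i fscale (c i) (w i)) = \sum_i fscale (c i) (grp_act s (w i)).
Proof.
apply/ffunP => p; rewrite ffunE !sum_ffunE; apply: eq_bigr => i _.
by rewrite !ffunE.
Qed.

Lemma ptens_e (k k'' : tidx) : ptens (fun j => e_ (k j)) k'' = (k == k'')%:R.
Proof.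
rewrite ffunE; case: (eqVneq k k'') => [<-|ne].
  by apply: big1 => j _; rewrite /e_ mxE !eqxx.
have [j hj] : exists j, k j != k'' j.
  apply/existsP; apply: contraR ne; rewrite negb_exists => /forallP H.
  by apply/eqP/ffunP => j; apply/eqP; have := H j; rewrite negbK.
by rewrite (bigD1 j) //= /e_ mxE eqxx eq_sym (negbTE hj) mul0r.
Qed.

Lemma tens_decomp (t : tens) : t = \sum_k fscale (t k) (ptens (fun j => e_ (k j))).
Proof.
apply/ffunP => k''; rewrite sum_ffunE (bigD1 k'') //= ffunE ptens_e eqxx mulr1.
rewrite big1 ?addr0 // => k /negbTE nk; by rewrite ffunE ptens_e nk mulr0.
Qed.

Lemma part2 i0 s (t : tens) : Pmap rho (tact rho i0 s t) = grp_act s (Pmap rho t).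
Proof.
rewrite {1 2}(tens_decomp t) tact_lin Pmap_lin Pmap_lin grp_act_lin.
apply: eq_bigr => k _; congr fscale.
rewrite tact_ptens; apply/ffunP => -[k' g]; by rewrite ffunE /= !Pmap_ptens Pv_upd.
Qed.

Lemma W_slot (u : 'I_r -> 'rV[rat]_n) i0 s x (k' : tidx) :
  \sum_(l < n) W u x (finfun (fun j => if j == i0 then l else k' j)) * A s l (k' i0)
  = W u (sh i0 s^-1 x) k'.
Proof.
rewrite /W slot_sum; apply: eq_bigr => j _; rewrite ffunE.
case: eqP => // ->; by rewrite invMg invgK AM AC mulmxA.
Qed.

Lemma Pv_cmap (v : 'I_r -> 'rV[rat]_n) i0 s (k' : tidx) g :
  \sum_(l < n) Pv v (finfun (fun j => if j == i0 then l else k' j)) g * A s l (k' i0)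
  = Pv v k' (s^-1 * g)%g.
Proof.
rewrite /Pv; under eq_bigr do rewrite mulr_suml.
rewrite exchange_big /=; apply: eq_bigr => f _.
under eq_bigr do rewrite -mulrA mulr_suml.
rewrite -mulr_sumr; congr (_ * _).
rewrite exchange_big /=.
under eq_bigr do rewrite W_slot.
by rewrite (sum_sh (fun x => W (fun j => v (f j)) x k')) [(g * _)%g]mulC.
Qed.

Lemma Pv_perm (v : 'I_r -> 'rV[rat]_n) (f : 'S_r) (k' : tidx) g :
  Pv v (finfun (fun j => k' (f j))) g = (-1) ^+ f * Pv v k' g.
Proof.
rewrite /Pv (reindex_inj (mulgI f)) mulr_sumr; apply: eq_bigr => h _ /=.
rewrite odd_permM signr_addb -mulrA; congr (_ * (_ * _)).
rewrite (reindex (fun y : sigT => [ffun j => y (f j)])); last first.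
  apply: onW_bij; exists (fun y : sigT => [ffun j => y ((f^-1)%g j)]) => y; apply/ffunP => j; by rewrite !ffunE ?permK ?permKV.
apply: eq_big => [y | y _].
  congr (_ == _); rewrite -(prodg_perm mulC y (@perm_inj _ f)); apply: eq_bigr => j _; by rewrite ffunE.
rewrite /W [RHS](reindex_inj (@perm_inj _ f)); apply: eq_bigr => j _.
by rewrite permM !ffunE.
Qed.

Lemma Pmap_perm (f : 'S_r) (t : tens) : permact f (Pmap rho t) = fscale ((-1) ^+ f) (Pmap rho t).
Proof.
apply/ffunP => -[k' g]; rewrite !ffunE /= !PmapE mulr_sumr; apply: eq_bigr => k _.
by rewrite Pv_perm mulrCA.
Qed.

Lemma Pmap_cmap i0 s (t : tens) : cmap rho i0 s (Pmap rho t) = grp_act s (Pmap rho t).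
Proof.
apply/ffunP => -[k' g]; rewrite !ffunE /= PmapE.
under eq_bigr do rewrite PmapE mulr_suml.
rewrite exchange_big /=; apply: eq_bigr => k _.
by rewrite -(Pv_cmap _ i0) mulr_sumr; apply: eq_bigr => l _; rewrite mulrA.
Qed.


Definition psi (k' : tidx) : 'I_r -> 'I_n -> gT -> int :=
  fun a i x => rho (x^-1)%g i (k' a).

Lemma phiQ_e (phi : 'I_n -> gT -> int) i x : phiQ phi (e_ i) x = (phi i x)%:~R.
Proof.
rewrite ffunE (bigD1 i) //= /e_ mxE !eqxx mul1r big1 ?addr0 // => l /negbTE nl.
by rewrite mxE nl andbF mul0r.
Qed.

Lemma Aint x i c : (rho x i c)%:~R = A x i c.
Proof. by rewrite /rhoQ mxE. Qed.

Lemma psi_hom k' a : is_ZG_hom rho (psi k' a).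
Proof.
move=> s i; apply/ffunP=> x; rewrite !ffunE.
under eq_bigr do rewrite eE.
rewrite /psi Aint invMg invgK mulC AM mxE; apply: eq_bigr => l _; by rewrite Aint.
Qed.

Lemma wedge_psi (t : tens) k' g : wedge_phi (psi k') t g = Pmap rho t (k', g).
Proof.
rewrite /wedge_phi sum_ffunE PmapE; apply: eq_bigr => k _; rewrite ffunE sum_ffunE; congr (_ * _).
apply: eq_bigr => f _; rewrite !ffunE; congr (_ * _); apply: eq_bigr => x _.
by apply: eq_bigr => j _; rewrite phiQ_e eE /psi Aint.
Qed.

Lemma part3int (t : tens) : rubin rho t -> forall p, Pmap rho t p \is a Num.int.
Proof.
move=> Hr [k' g]; rewrite -wedge_psi; apply: Hr => a; exact: psi_hom.
Qed.

Lemma hom_expand (phi : 'I_n -> gT -> int) : is_ZG_hom rho phi -> forall i x,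
  (phi i x)%:~R = \sum_(c < n) A (x^-1)%g i c * (phi c 1%g)%:~R :> rat.
Proof.
move=> H i x; have := congr1 (fun F : {ffun gT -> rat} => F 1%g) (H x^-1%g i); rewrite !ffunE.
under eq_bigr do rewrite eE.
by rewrite invgK mulg1 => ->.
Qed.

Lemma prod_expand (phis : 'I_r -> 'I_n -> gT -> int) : (forall a, is_ZG_hom rho (phis a)) ->
  forall (k : tidx) (f : 'S_r) (x : sigT),
  \prod_a (phis a (k (f a)) (x a))%:~R =
  \sum_(k' : tidx) (\prod_a (phis a (k' a) 1%g)%:~R) * W (fun j => e_ (k (f j))) x k'.
Proof.
move=> H k f x.
under eq_bigr => a _ do rewrite (hom_expand (H a)).
rewrite bigA_distr_bigA; apply: eq_bigr => k' _.
rewrite /W -big_split /=; apply: eq_bigr => a _; by rewrite eE mulrC.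
Qed.

Lemma wedge_expand (phis : 'I_r -> 'I_n -> gT -> int) : (forall a, is_ZG_hom rho (phis a)) ->
  forall (t : tens) g, wedge_phi phis t g =
  \sum_(k' : tidx) (\prod_a (phis a (k' a) 1%g)%:~R) * Pmap rho t (k', g).
Proof.
move=> H t g.
rewrite /wedge_phi sum_ffunE.
under [RHS]eq_bigr do rewrite PmapE mulr_sumr.
rewrite [RHS]exchange_big /=; apply: eq_bigr => k _.
rewrite ffunE sum_ffunE.
under [RHS]eq_bigr do rewrite mulrCA.
rewrite -mulr_sumr; congr (_ * _).
under [RHS]eq_bigr do rewrite /Pv mulr_sumr.
rewrite [RHS]exchange_big /=; apply: eq_bigr => f _.
rewrite !ffunE.
under [RHS]eq_bigr do rewrite mulrCA.
rewrite -mulr_sumr; congr (_ * _).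
under [RHS]eq_bigr do rewrite mulr_sumr.
rewrite [RHS]exchange_big /=; apply: eq_bigr => x _.
under eq_bigr do rewrite phiQ_e.
exact: prod_expand.
Qed.


Lemma WR0 : wedge_rel rho (0 : tens).
Proof.
exists 0%N, (fun _ => 0), (fun _ => 0); split; first by move=> [].
by rewrite big_ord0.
Qed.

Lemma WReq (a b : tens) : a = b -> wedge_rel rho a -> wedge_rel rho b.
Proof. by move=> ->. Qed.

Lemma WRD (a b : tens) : wedge_rel rho a -> wedge_rel rho b -> wedge_rel rho (a + b).
Proof.
case=> k1 [c1 [w1 [H1 ->]]] [k2 [c2 [w2 [H2 ->]]]].
exists (k1 + k2)%N, (fun l => match split l with inl i => c1 i | inr j => c2 j end),
  (fun l => match split l with inl i => w1 i | inr j => w2 j end); split.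
  by move=> l; case: (split l).
rewrite big_split_ord /=; congr (_ + _); apply: eq_bigr => i _.
  by have -> : split (lshift k2 i) = inl i := unsplitK (inl i).
by have -> : split (rshift k1 i) = inr i := unsplitK (inr i).
Qed.

Lemma WRZ c (a : tens) : wedge_rel rho a -> wedge_rel rho (fscale c a).
Proof.
case=> k [c1 [w1 [H1 ->]]]; exists k, (fun l => c * c1 l), w1; split => //.
apply/ffunP => p; rewrite ffunE !sum_ffunE mulr_sumr; apply: eq_bigr => l _.
by rewrite !ffunE mulrA.
Qed.

Lemma WRgen (w : tens) : wedge_gen rho w -> wedge_rel rho w.
Proof.
move=> H; exists 1%N, (fun _ => 1), (fun _ => w); split => //.
by rewrite big_ord1; apply/ffunP => p; rewrite ffunE mul1r.
Qed.

Lemma WRB (a b : tens) : wedge_rel rho a -> wedge_rel rho b -> wedge_rel rho (a - b).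
Proof.
move=> Ha Hb; apply: (WReq _ (WRD Ha (WRZ (-1) Hb))).
by apply/ffunP => p; rewrite !ffunE mulN1r.
Qed.

Lemma WRtrans (a b c : tens) : wedge_rel rho (a - b) -> wedge_rel rho (b - c) -> wedge_rel rho (a - c).
Proof.
move=> H1 H2; apply: (WReq _ (WRD H1 H2)); by rewrite addrA subrK.
Qed.

Lemma WRsum (I : finType) (P : pred I) (w : I -> tens) :
  (forall i, P i -> wedge_rel rho (w i)) -> wedge_rel rho (\sum_(i | P i) w i).
Proof.
move=> H; apply: (big_ind (wedge_rel rho)) => //; [exact: WR0 | exact: WRD].
Qed.

Lemma ptens_ext (v w : 'I_r -> 'rV[rat]_n) : (forall j, v j = w j) -> ptens v = ptens w.
Proof. by move=> H; apply/ffunP => k; rewrite !ffunE; apply: eq_bigr => j _; rewrite H. Qed.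

Lemma ptens_add i (w : 'I_r -> 'rV[rat]_n) a b :
  ptens (fun l => if l == i then a + b else w l) =
  ptens (fun l => if l == i then a else w l) + ptens (fun l => if l == i then b else w l).
Proof.
apply/ffunP => k; rewrite !ffunE (bigD1 i) //= (bigD1 i (P := predT)) //= (bigD1 i (P:=predT)) //=.
rewrite !eqxx mxE mulrDl; congr (_ * _ + _ * _); apply: eq_bigr => j /negbTE ->//.
Qed.

Lemma lin4 (a b c d : tens) : a + b + (c + d) - a - d = c + b.
Proof. by apply/ffunP => k; rewrite !ffunE; ring. Qed.

Lemma lin3 (p1 p2 p3 : tens) (s : rat) : (p3 + p2) - (p2 - fscale s p1) = p3 - fscale (- s) p1.
Proof. by apply/ffunP => k; rewrite !ffunE; ring. Qed.

Lemma AT (x : 'I_r -> 'rV[rat]_n) i j : i != j ->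
  wedge_rel rho (ptens (fun l => x (tperm i j l)) + ptens x).
Proof.
move=> ij.
pose V a b := fun l => if l == i then a else if l == j then b else x l.
have gen a : wedge_rel rho (ptens (V a a)).
  apply: WRgen; left; exists (V a a), i, j; split => //; split => //.
  by rewrite /V eqxx; case: eqP; rewrite ?eqxx.
have splitA a a' b : ptens (V (a + a') b) = ptens (V a b) + ptens (V a' b).
  exact: ptens_add.
have splitB a b b' : ptens (V a (b + b')) = ptens (V a b) + ptens (V a b').
  have E c : ptens (V a c) = ptens (fun l => if l == j then c else if l == i then a else x l).
    apply: ptens_ext => l; rewrite /V; case: (l =P i) => [->|/eqP/negbTE li]; by rewrite ?(negbTE ij) ?eqxx ?li.
  by rewrite !E ptens_add.
have E1 : ptens (V (x i) (x j)) = ptens x.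
  apply: ptens_ext => l; rewrite /V; case: eqP => [->//|_]; by case: eqP => [->|].
have E2 : ptens (V (x j) (x i)) = ptens (fun l => x (tperm i j l)).
  apply: ptens_ext => l; rewrite /V; case: (l =P i) => [->|/eqP li].
    by rewrite tpermL.
  case: (l =P j) => [->|/eqP lj]; first by rewrite tpermR.
  by rewrite tpermD // eq_sym.
have := WRB (WRB (gen (x i + x j)) (gen (x i))) (gen (x j)).
apply: WReq; rewrite splitA !splitB -E1 -E2.
exact: lin4.
Qed.

Lemma AS (x : 'I_r -> 'rV[rat]_n) (f : 'S_r) :
  wedge_rel rho (ptens (fun j => x (f j)) - fscale ((-1) ^+ f) (ptens x)).
Proof.
have [ts -> dts] := prod_tpermP f.
elim: ts dts => [|t ts IH] /=.
  move=> _; apply: (WReq _ WR0); rewrite big_nil odd_perm1 /=.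
  by apply/ffunP => k; rewrite !ffunE /=; under eq_bigr do rewrite perm1; ring.
case/andP => dt dts; rewrite big_cons.
set f' := (\prod_(t <- ts) tperm t.1 t.2)%g.
have := WRB (AT (fun l => x (f' l)) dt) (IH dts).
apply: WReq; rewrite odd_permM odd_tperm dt /= signrN.
have -> : ptens (fun j => x ((tperm t.1 t.2 * f')%g j)) = ptens (fun l => x (f' (tperm t.1 t.2 l))).
  by apply: ptens_ext => l; rewrite permM.
exact: lin3.
Qed.


Definition Fr : rat := \sum_(f : 'S_r) 1.
Definition Cg (g : gT) : rat := \sum_(x : sigT | (\prod_j x j == g)%g) 1.
Definition Qm (t : tens) : tens := [ffun k' => Pmap rho t (k', 1%g) / (Fr * Cg 1%g)].

Lemma Cg_const (j0 : 'I_r) g : Cg g = Cg 1%g.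
Proof. by have := sum_sh (fun _ => 1) j0 g 1%g; rewrite mul1g /Cg => <-. Qed.

Lemma Fr_gt0 : 0 < Fr.
Proof.
rewrite /Fr (bigD1 1%g) //=.
have : 0 <= \sum_(i : 'S_r | i != 1%g) (1 : rat) by apply: sumr_ge0 => ? _; exact: ler01.
lra.
Qed.

Lemma C_gt0 : 0 < Cg 1%g.
Proof.
rewrite /Cg (bigD1 [ffun => 1%g]) /=; last by apply/eqP; apply: big1 => j _; rewrite ffunE.
have : 0 <= \sum_(i : sigT | (\prod_j i j == 1)%g && (i != [ffun => 1%g])) (1 : rat).
  by apply: sumr_ge0 => ? _; exact: ler01.
lra.
Qed.

Lemma sum_constr (I : finType) (P : pred I) (a : rat) :
  \sum_(i | P i) a = (\sum_(i | P i) 1) * a.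
Proof. by rewrite mulr_suml; apply: eq_bigr => i _; rewrite mul1r. Qed.

Lemma twist (i0 : 'I_r) (x : 'I_r -> 'rV[rat]_n) (s : sigT) :
  wedge_rel rho (ptens (fun j => x j *m A (s j)^-1) -
                 ptens (fun j => if j == i0 then x j *m A ((\prod_l s l)^-1)%g else x j)).
Proof.
suff H : forall m (s : sigT), (forall j : 'I_r, j != i0 -> (m <= j)%N -> s j = 1%g) ->
  wedge_rel rho (ptens (fun j => x j *m A (s j)^-1) -
                 ptens (fun j => if j == i0 then x j *m A ((\prod_l s l)^-1)%g else x j)).
  by apply: (H r) => j _; rewrite leqNgt ltn_ord.
elim=> [|m IH] {}s Hs.
  apply: (WReq _ WR0).
  have -> : (\prod_l s l)%g = s i0.
    rewrite (prodgD1 mulC i0) big1 ?mulg1 // => j ji; exact: Hs.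
  have -> : ptens (fun j => x j *m A (s j)^-1) =
            ptens (fun j => if j == i0 then x j *m A (s i0)^-1 else x j).
    apply: ptens_ext => j; case: eqP => [->//|/eqP ji].
    by rewrite Hs // invg1 A1 mulmx1.
  by rewrite subrr.
case: (ltnP m r) => [mr | rm]; last first.
  apply: IH => j ji mj; exfalso; move: (ltn_ord j); rewrite ltnNge.
  by rewrite (leq_trans rm mj).
pose jm := Ordinal mr.
case: (eqVneq jm i0) => [e | ne].
  apply: IH => j ji mj; apply: Hs => //.
  rewrite ltn_neqAle mj andbT; apply: contra ji => /eqP mj'.
  by rewrite -e; apply/eqP/val_inj.
pose s0 : sigT := [ffun j => if j == jm then 1%g else s j].
pose s' := sh i0 (s jm) s0.
have Ps : (\prod_l s' l = \prod_l s l)%g.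
  rewrite prod_sh; have := prodg_eq mulC (F := s0) (G := s) (j := jm).
  rewrite ffunE eqxx mulg1 => ->//; move=> i /negbTE ni; by rewrite ffunE ni.
have Hs' : forall j : 'I_r, j != i0 -> (m <= j)%N -> s' j = 1%g.
  move=> j ji mj; rewrite !ffunE (negbTE ji).
  case: eqP => // /eqP nj; apply: Hs => //.
  rewrite ltn_neqAle mj andbT; apply: contra nj => /eqP mj'.
  by apply/eqP/val_inj.
have := IH s' Hs'; rewrite Ps; apply: WRtrans.
apply: WRgen; right.
pose v := fun j => if j == jm then x j else x j *m A (s j)^-1.
exists v, jm, i0, (s jm)^-1%g.
congr (_ - _); apply: ptens_ext => l; rewrite /upd /v.
  by case: eqP => [->|]; rewrite ?eqxx.
rewrite !ffunE; case: (eqVneq l i0) => [->|li].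
  by rewrite eq_sym (negbTE ne) invMg AM AC mulmxA.
case: eqP => // _; by rewrite invg1 A1 mulmx1.
Qed.

Lemma ML (i0 : 'I_r) (k : tidx) :
  wedge_rel rho (ptens (fun j => e_ (k j)) - Qm (ptens (fun j => e_ (k j)))).
Proof.
set c := 1 / (Fr * Cg 1%g).
have cE : c * (Fr * Cg 1%g) = 1 by rewrite /c mul1r mulVf //; have := Fr_gt0; have := C_gt0; nra.
have -> : ptens (fun j => e_ (k j)) - Qm (ptens (fun j => e_ (k j))) =
  \sum_(f : 'S_r) \sum_(x : sigT | (\prod_j x j == 1)%g)
     fscale c (ptens (fun j => e_ (k j)) -
               fscale ((-1) ^+ f) (ptens (fun j => e_ (k (f j)) *m A (x j)^-1))).
  apply/ffunP => k'; rewrite sum_ffunE.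
  under eq_bigr do rewrite sum_ffunE.
  under eq_bigr do under eq_bigr do rewrite !ffunE mulrBr.
  under eq_bigr do rewrite sumrB.
  rewrite sumrB !ffunE Pmap_ptens.
  set p := \prod_(j < r) e_ (k j) 0 (k' j).
  under eq_bigr do rewrite (sum_constr _ (c * p)) -/(Cg 1%g).
  rewrite (sum_constr (fun _ => true) (Cg 1%g * (c * p))) -/Fr.
  congr (_ - _).
    by rewrite -[LHS]mul1r -{1}cE; ring.
  rewrite /Pv /c mul1r mulrC mulr_sumr; apply: eq_bigr => f _.
  rewrite -mulr_sumr; congr (_ * _); rewrite mulr_sumr; apply: eq_bigr => x _.
  by [].
apply: WRsum => f _; apply: WRsum => x Px; apply: WRZ.
set y := fun j => e_ (k (f j)).
have H1 := twist i0 y x.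
rewrite (eqP Px) invg1 A1 in H1.
have E : ptens (fun j => if j == i0 then y j *m 1%:M else y j) = ptens y.
  by apply: ptens_ext => j; case: eqP; rewrite ?mulmx1.
rewrite E in H1.
have H2 := AS (fun j => e_ (k j)) f.
have := WRD (WRZ (- (-1) ^+ f) H1) (WRZ (- (-1) ^+ f) H2).
apply: WReq; apply/ffunP => k'; rewrite !ffunE.
rewrite /y; case: (odd_perm f); rewrite /= ?expr1 ?expr0; ring.
Qed.


Lemma fscaleE c (w : tens) k : fscale c w k = c * w k.
Proof. by rewrite ffunE. Qed.
Lemma subE (a b : tens) k : (a - b) k = a k - b k.
Proof. by rewrite !ffunE. Qed.
Lemma QmE (t : tens) k' : Qm t k' = Pmap rho t (k', 1%g) / (Fr * Cg 1%g).
Proof. by rewrite ffunE. Qed.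

Lemma part4 (i0 : 'I_r) (t t' : tens) : Pmap rho t = Pmap rho t' -> wedge_rel rho (t - t').
Proof.
move=> E; set u := t - t'.
have Pu : Pmap rho u = 0 by rewrite /u Pmap_sub E subrr.
clearbody u.
have -> : u = \sum_k fscale (u k) (ptens (fun j => e_ (k j)) - Qm (ptens (fun j => e_ (k j)))).
  apply/ffunP => k'; rewrite sum_ffunE.
  under eq_bigr do rewrite fscaleE subE mulrBr.
  rewrite sumrB.
  have -> : \sum_k u k * ptens (fun j => e_ (k j)) k' = u k'.
    have := congr1 (fun F : tens => F k') (tens_decomp u); rewrite sum_ffunE => ->.
    by apply: eq_bigr => k _; rewrite fscaleE.
  under eq_bigr do rewrite QmE Pmap_ptens mulrA.
  by rewrite -mulr_suml -PmapE Pu ffunE mul0r subr0.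
apply: WRsum => k _; apply: WRZ; exact: ML.
Qed.

Lemma prod_delta (kap k' : tidx) : \prod_j (1%:M : 'M[rat]_n) (kap j) (k' j) = (kap == k')%:R.
Proof.
case: (eqVneq kap k') => [<-|ne].
  by apply: big1 => j _; rewrite mxE eqxx.
have [j hj] : exists j, kap j != k' j.
  apply/existsP; apply: contraR ne; rewrite negb_exists => /forallP H.
  by apply/eqP/ffunP => j; apply/eqP; have := H j; rewrite negbK.
by rewrite (bigD1 j) //= mxE (negbTE hj) mulr0n mul0r.
Qed.

Lemma slot_split (z : tidx -> rat) (B : 'I_r -> 'M[rat]_n) (X : 'M[rat]_n) jm (k' : tidx) :
  B jm = 1%:M ->
  \sum_(kap : tidx) z kap * \prod_j (if j == jm then X else B j) (kap j) (k' j) =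
  \sum_(l < n) (\sum_(kap : tidx) z kap * \prod_j B j (kap j) (finfun (fun j => if j == jm then l else k' j) j)) * X l (k' jm).
Proof.
move=> Bjm; under [RHS]eq_bigr do rewrite mulr_suml.
rewrite [RHS]exchange_big /=; apply: eq_bigr => kap _.
rewrite [RHS](bigD1 (kap jm)) //= [X in _ = _ + X]big1 ?addr0; last first.
  move=> l /negbTE nl; rewrite (bigD1 jm) //= ffunE eqxx Bjm mxE eq_sym nl mulr0n.
  by rewrite mul0r mulr0 mul0r.
rewrite (bigD1 jm) //= [in RHS](bigD1 jm) //= ffunE !eqxx Bjm mxE eqxx mulr1n mul1r.
rewrite -[RHS]mulrA; congr (_ * _); rewrite mulrC; congr (_ * _).
by apply: eq_bigr => j /negbTE nj; rewrite ffunE nj.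
Qed.

Section Star.
Variables (i0 : 'I_r) (y : gtens).
Hypothesis Hp : forall f : 'S_r, permact f y = fscale ((-1) ^+ f) y.
Hypothesis Hc : forall s : gT, cmap rho i0 s y = grp_act s y.

Lemma yP (t : 'S_r) (k : tidx) h : y (finfun (fun m => k (t m)), h) = (-1) ^+ t * y (k, h).
Proof. by have := congr1 (fun F : gtens => F (k, h)) (Hp t); rewrite !ffunE. Qed.

Lemma ySC j s g (k' : tidx) :
  \sum_(l < n) y (finfun (fun m => if m == j then l else k' m), g) * A s l (k' j) = y (k', (s^-1 * g)%g).
Proof.
case: (eqVneq j i0) => [->|ji].
  by have := congr1 (fun F : gtens => F (k', g)) (Hc s); rewrite !ffunE.
pose t := tperm i0 j.
have yN : forall (k : tidx) h, y (k, h) = - y (finfun (fun m => k (t m)), h).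
  by move=> k h; rewrite yP odd_tperm eq_sym ji /= expr1 mulN1r opprK.
transitivity (- \sum_(l < n) y (finfun (fun m => if m == i0 then l else (finfun (fun m => k' (t m))) m), g)
                   * A s l ((finfun (fun m => k' (t m))) i0)).
  rewrite -sumrN; apply: eq_bigr => l _; rewrite yN mulNr; congr (- (y (_, g) * _)).
    apply/ffunP => m; rewrite !ffunE (canF_eq (tpermK i0 j)) tpermR.
    by case: eqP.
  by rewrite ffunE /t tpermL.
have := congr1 (fun F : gtens => F (finfun (fun m => k' (t m)), g)) (Hc s); rewrite !ffunE /= => ->.
by rewrite (yN k' (s^-1 * g)%g).
Qed.

Lemma TL (x : sigT) g (k' : tidx) :
  \sum_(kap : tidx) y (kap, g) * \prod_j A (x j)^-1 (kap j) (k' j) = y (k', (\prod_j x j) * g)%g.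
Proof.
suff H : forall m (x : sigT), (forall j : 'I_r, (m <= j)%N -> x j = 1%g) -> forall g (k' : tidx),
  \sum_(kap : tidx) y (kap, g) * \prod_j A (x j)^-1 (kap j) (k' j) = y (k', (\prod_j x j) * g)%g.
  by apply: (H r) => j; rewrite leqNgt ltn_ord.
elim=> [|m IH] {}x Hx g' k''.
  have -> : (\prod_j x j)%g = 1%g by apply: big1 => j _; exact: Hx.
  under eq_bigr do (under eq_bigr do rewrite Hx // invg1 A1; rewrite prod_delta).
  rewrite mul1g (bigD1 k'') //= eqxx mulr1 big1 ?addr0 // => kap /negbTE ->; by rewrite mulr0.
case: (ltnP m r) => [mr|rm]; last first.
  apply: IH => j mj; exfalso; move: (ltn_ord j); by rewrite ltnNge (leq_trans rm mj).
pose jm := Ordinal mr.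
pose x0 : sigT := [ffun j => if j == jm then 1%g else x j].
have Hx0 : forall j : 'I_r, (m <= j)%N -> x0 j = 1%g.
  move=> j mj; rewrite ffunE; case: eqP => // /eqP nj; apply: Hx.
  rewrite ltn_neqAle mj andbT; apply: contra nj => /eqP mj'.
  by apply/eqP/val_inj.
have Px : (\prod_j x j = \prod_j x0 j * x jm)%g.
  have := prodg_eq mulC (F := x0) (G := x) (j := jm).
  rewrite ffunE eqxx mulg1 => ->//; move=> i /negbTE ni; by rewrite ffunE ni.
have -> : \sum_(kap : tidx) y (kap, g') * \prod_j A (x j)^-1 (kap j) (k'' j) =
          \sum_(kap : tidx) y (kap, g') * \prod_j (if j == jm then A (x jm)^-1 else A (x0 j)^-1) (kap j) (k'' j).
  apply: eq_bigr => kap _; congr (_ * _); apply: eq_bigr => j _; rewrite /x0 ?ffunE.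
  by case: eqP => [->|].
rewrite (slot_split (fun kap => y (kap, g'))); last by rewrite /x0 ffunE eqxx invg1 A1.
under eq_bigr do rewrite IH //.
by rewrite ySC invgK Px mulgA (mulC (x jm)).
Qed.

Lemma inner (f : 'S_r) (x : sigT) (k' : tidx) :
  \sum_(k : tidx) y (k, 1%g) * W (fun j => e_ (k (f j))) x k' = (-1) ^+ f * y (k', \prod_j x j)%g.
Proof.
rewrite (reindex (fun kap : tidx => [ffun j => kap ((f^-1)%g j)])); last first.
  apply: onW_bij; exists (fun k : tidx => [ffun j => k (f j)]) => kap; apply/ffunP => j; by rewrite !ffunE ?permK ?permKV.
have -> : y (k', \prod_j x j)%g = y (k', (\prod_j x j) * 1)%g by rewrite mulg1.
rewrite -TL mulr_sumr; apply: eq_bigr => kap _.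
rewrite /W (eq_bigr (fun j => A (x j)^-1 (kap j) (k' j))); last by move=> j _; rewrite ffunE permK eE.
by rewrite (yP (f^-1)%g kap 1%g) odd_permV mulrA.
Qed.

End Star.


Lemma part5 (i0 : 'I_r) (y : gtens) : star rho i0 y -> exists t, rubin rho t /\ Pmap rho t = y.
Proof.
case=> Hint [Hp Hc].
pose D := Fr * Cg 1%g.
have D0 : D != 0 by rewrite /D mulf_neq0 // lt0r_neq0 ?Fr_gt0 ?C_gt0.
pose t : tens := [ffun k => y (k, 1%g) / D].
have Pt : Pmap rho t = y.
  apply/ffunP => -[k' g]; rewrite PmapE.
  transitivity (\sum_(f : 'S_r) \sum_(x : sigT | (\prod_j x j == g)%g) y (k', g) / D).
    rewrite /Pv.
    under eq_bigr do rewrite ffunE !mulr_sumr.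
    rewrite exchange_big /=; apply: eq_bigr => f _.
    under eq_bigr do rewrite mulrCA mulr_sumr mulr_sumr.
    rewrite exchange_big /=; apply: eq_bigr => x /eqP Px.
    transitivity ((-1) ^+ f / D * \sum_(k : tidx) y (k, 1%g) * W (fun j => e_ (k (f j))) x k').
      by rewrite mulr_sumr; apply: eq_bigr => k _; rewrite -!mulrA; congr (_ * _); rewrite mulrCA.
    rewrite (inner Hp Hc) Px; case: (odd_perm f); rewrite /= ?expr1 ?expr0; ring.
  under eq_bigr do rewrite (sum_constr _ (y (k', g) / D)) -/(Cg g) (Cg_const i0).
  rewrite (sum_constr (fun _ => true)) -/Fr.
  by rewrite mulrA -/D mulrCA mulfV // mulr1.
exists t; split=> //.
move=> phis Hphi s; rewrite (wedge_expand Hphi) Pt.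
apply: rpred_sum => k' _; apply: rpredM; last exact: Hint.
by apply: rpred_prod => a _; exact: intr_int.
Qed.

End Main.

Unset Implicit Arguments.

Theorem proposition3p3 (gT : finGroupType) (Hab : abelian [set: gT])
  (n : nat) (rho : gT -> 'M[int]_n) (Hrho : is_lattice_rep rho)
  (r : nat) (hr : (0 < r)%N) :
  let i0 := Ordinal hr in
  (* P is well defined on Q /\^r_{Z[G]} M *)
  (forall t : {ffun {ffun 'I_r -> 'I_n} -> rat}, wedge_rel rho t -> Pmap rho t = 0) /\
  (* P is Z[G]-linear *)
  (forall (s : gT) (t : {ffun {ffun 'I_r -> 'I_n} -> rat}), Pmap rho (tact rho i0 s t) = grp_act s (Pmap rho t)) /\
  (* P maps /\_0^r M into (M,G)^r_star *)
  (forall t : {ffun {ffun 'I_r -> 'I_n} -> rat}, rubin rho t -> star rho i0 (Pmap rho t)) /\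
  (* injective on /\_0^r M *)
  (forall t t' : {ffun {ffun 'I_r -> 'I_n} -> rat}, rubin rho t -> rubin rho t' ->
      Pmap rho t = Pmap rho t' -> wedge_rel rho (t - t')) /\
  (* onto (M,G)^r_star *)
  (forall y : {ffun {ffun 'I_r -> 'I_n} * gT -> rat}, star rho i0 y -> exists t, rubin rho t /\ Pmap rho t = y).
Proof.
move=> i0.
have mulC : commutative (@mulg gT).
  by move=> a b; apply: (centsP Hab a (in_setT a) b (in_setT b)).
split; first by move=> t; apply: part1.
split; first by move=> s t; apply: part2.
split.
  move=> t Ht; split; first exact: part3int.
  split=> [f|s]; [exact: Pmap_perm | exact: Pmap_cmap].
split; first by move=> t t' _ _; apply: part4.
by move=> y; apply: part5.
Qed.
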